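(* Let $k_1,k_2,k_5$ be nonzero real constants and consider the equation $$u_t=k_5+\frac{1}{x}\bigl(k_1 x e^{k_2 u} u_x\bigr)_x$$ together with its Lie point symmetry $X=k_2 x\frac{\partial}{\partial x}+2\frac{\partial}{\partial u}$. The invariant solution of this equation corresponding to $X$ is $u(x,t)=\frac{1}{k_2}\ln\left(\frac{x^2}{p(t)}\right)$, where $p(t)$ satisfies the similarity reduction equation $$p'(t)+k_2k_5\,p(t)+4k_1=0,$$ whose solution is $p(t)=-\frac{4k_1}{k_2k_5}+c_1e^{-k_2k_5 t}$ with an arbitrary constant $c_1$.
   Context: A function $u=u(x,t)$ is an invariant solution of the equation corresponding to the infinitesimal symmetry $X=\xi\frac{\partial}{\partial x}+\tau\frac{\partial}{\partial t}+\eta\frac{\partial}{\partial u}$ if and only if (i) $u$ satisfies the equation and (ii) $u$ defines an invariant surface of $X$, i.e. $\xi\frac{\partial u}{\partial x}+\tau\frac{\partial u}{\partial t}-\eta=0$. Here $x>0$ is the cylindrical radial variable. *)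

(* Defs.v *)
From Stdlib Require Import Reals.
From Coquelicot Require Import Coquelicot.
Open Scope R_scope.

Definition in_time (a b : Rbar) (t : R) : Prop := Rbar_lt a t /\ Rbar_lt t b.

Definition u_x (u : R -> R -> R) (x t : R) : R := Derive (fun y => u y t) x.
Definition u_t (u : R -> R -> R) (x t : R) : R := Derive (fun s => u x s) t.

Definition is_solution (k1 k2 k5 : R) (a b : Rbar) (u : R -> R -> R) : Prop :=
  forall x t, 0 < x -> in_time a b t ->
    ex_derive (fun y => u y t) x /\
    ex_derive (fun s => u x s) t /\
    ex_derive (fun y => k1 * y * exp (k2 * u y t) * u_x u y t) x /\
    u_t u x t = k5 + / x * Derive (fun y => k1 * y * exp (k2 * u y t) * u_x u y t) x.

(* Invariant surface condition for X = xi d/dx + tau d/dt + eta d/du. *)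
Definition invariant_surface (xi tau eta : R -> R -> R -> R) (a b : Rbar)
  (u : R -> R -> R) : Prop :=
  forall x t, 0 < x -> in_time a b t ->
    xi x t (u x t) * u_x u x t + tau x t (u x t) * u_t u x t - eta x t (u x t) = 0.

Definition invariant_solution (k1 k2 k5 : R) (xi tau eta : R -> R -> R -> R)
  (a b : Rbar) (u : R -> R -> R) : Prop :=
  is_solution k1 k2 k5 a b u /\ invariant_surface xi tau eta a b u.

Definition X_xi (k2 : R) (x t v : R) : R := k2 * x.
Definition X_tau (x t v : R) : R := 0.
Definition X_eta (x t v : R) : R := 2.

(* Main.v *)
Require Import Defs.
From Stdlib Require Import Reals Lra.
From Coquelicot Require Import Coquelicot.
Open Scope R_scope.

Lemma loc_pos x : 0 < x -> locally x (fun y => 0 < y).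
Proof. intros H; exact (open_gt 0 x H). Qed.

Lemma loc_I a b t : in_time a b t -> locally t (in_time a b).
Proof. intros H; exact (open_and _ _ (open_Rbar_gt a) (open_Rbar_lt b) t H). Qed.

Lemma in_time_conv a b t1 t2 s : in_time a b t1 -> in_time a b t2 -> t1 <= s <= t2 -> in_time a b s.
Proof.
  unfold in_time; destruct a, b; simpl; intros; lra.
Qed.

Lemma const_pos (g : R -> R) : (forall y, 0 < y -> is_derive g y 0) -> forall x, 0 < x -> g x = g 1.
Proof.
  intros Hd x Hx.
  destruct (Rtotal_order x 1) as [H|[H|H]].
  - apply eq_is_derive; [intros s Hs; apply Hd; lra | lra].
  - subst; reflexivity.
  - symmetry; apply eq_is_derive; [intros s Hs; apply Hd; lra | lra].
Qed.

Lemma const_I a b (g : R -> R) : (forall t, in_time a b t -> is_derive g t 0) ->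
  forall t1 t2, in_time a b t1 -> in_time a b t2 -> g t1 = g t2.
Proof.
  intros Hd t1 t2 H1 H2.
  destruct (Rtotal_order t1 t2) as [H|[H|H]].
  - apply eq_is_derive; [intros s Hs; apply Hd; apply (in_time_conv a b t1 t2); auto | lra].
  - subst; reflexivity.
  - symmetry; apply eq_is_derive; [intros s Hs; apply Hd; apply (in_time_conv a b t2 t1); auto | lra].
Qed.


Lemma dx k2 (p:R->R) t y : k2 <> 0 -> 0 < p t -> 0 < y -> is_derive (fun z => /k2*ln(z^2/p t)) y (2/(k2*y)).
Proof. intros. auto_derive.
  - apply Rmult_lt_0_compat; [nra | apply Rinv_0_lt_compat; auto].
  - field. split; [|split]; lra.
Qed.
Lemma dt k2 (p:R->R) t x : k2 <> 0 -> 0 < p t -> 0 < x -> ex_derive p t -> is_derive (fun s => /k2*ln(x^2/p s)) t (- Derive p t/(k2*p t)).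
Proof. intros. auto_derive.
  - repeat split; auto; try lra. apply Rmult_lt_0_compat; [nra | apply Rinv_0_lt_compat; auto].
  - change (fun x0 : R => p x0) with p. set (D := Derive p t). field. repeat split; lra.
Qed.

Theorem theorem4 (k1 k2 k5 : R) (a b : Rbar) (u : R -> R -> R) :
  k1 <> 0 -> k2 <> 0 -> k5 <> 0 -> Rbar_lt a b ->
  (invariant_solution k1 k2 k5 (X_xi k2) X_tau X_eta a b u <->
   exists p : R -> R,
     (forall t, in_time a b t -> 0 < p t) /\
     (forall x t, 0 < x -> in_time a b t -> u x t = / k2 * ln (x ^ 2 / p t)) /\
     (forall t, in_time a b t ->
        ex_derive p t /\ Derive p t + k2 * k5 * p t + 4 * k1 = 0) /\
     (exists c1 : R, forall t, in_time a b t ->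
        p t = - (4 * k1) / (k2 * k5) + c1 * exp (- (k2 * k5) * t))).
Proof.
  intros Hk1 Hk2 Hk5 Hab. split.
  - intros [Hsol Hinv].
    assert (Hux' : forall y t, 0 < y -> in_time a b t -> u_x u y t = 2/(k2*y)).
    { intros y t Hy Ht. pose proof (Hinv y t Hy Ht) as H. unfold X_xi, X_tau, X_eta in H.
      assert (H' : k2 * y * u_x u y t = 2) by lra.
      replace (u_x u y t) with ((k2 * y * u_x u y t)/(k2*y)) by (field; split; lra).
      rewrite H'. reflexivity. }
    assert (Hform : forall x t, 0 < x -> in_time a b t -> u x t = 2/k2*ln x + u 1 t).
    { intros x t Hx Ht.
      assert (Hd0 : forall y, 0 < y -> is_derive (fun z => u z t - 2/k2*ln z) y 0).
      { intros y Hy. auto_derive.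
        - destruct (Hsol y t Hy Ht) as [Ex _]. repeat split; auto; lra.
        - pose proof (Hux' y t Hy Ht) as E. unfold u_x in E. rewrite E. field. split; lra. }
      pose proof (const_pos _ Hd0 x Hx) as E. cbv beta in E. rewrite ln_1 in E. lra. }
    set (p := fun t => exp (- k2 * u 1 t)).
    assert (Hppos : forall t, 0 < p t) by (intros; unfold p; apply exp_pos).
    assert (Hut1 : forall t, in_time a b t -> is_derive (fun s => u 1 s) t (u_t u 1 t)).
    { intros t Ht. unfold u_t. apply Derive_correct. apply (Hsol 1 t); auto; lra. }
    assert (Hpd : forall t, in_time a b t -> is_derive p t (- k2 * u_t u 1 t * p t)).
    { intros t Ht. unfold p. auto_derive.
      - exists (u_t u 1 t). apply Hut1; auto.
      - unfold u_t. ring. }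
    assert (Hflux : forall t, in_time a b t -> forall z : R, 0 < z ->
       2*k1*z^2*exp (k2 * u 1 t)/k2 = k1 * z * exp (k2 * u z t) * u_x u z t).
    { intros t Ht z Hz. rewrite Hux' by auto. rewrite (Hform z t Hz Ht).
      replace (k2 * (2 / k2 * ln z + u 1 t)) with (ln z + ln z + k2 * u 1 t) by (field; auto).
      rewrite !exp_plus, exp_ln by auto. field. split; lra. }
    assert (Hfd : forall t, in_time a b t ->
       Derive (fun y => k1 * y * exp (k2 * u y t) * u_x u y t) 1 = 4*k1*exp (k2 * u 1 t)/k2).
    { intros t Ht. apply is_derive_unique.
      apply is_derive_ext_loc with (fun z => 2*k1*z^2*exp (k2 * u 1 t)/k2).
      - eapply filter_imp; [|exact (loc_pos 1 Rlt_0_1)]. exact (Hflux t Ht).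
      - auto_derive; auto. field. auto. }
    assert (HPQ : forall t, p t * exp (k2 * u 1 t) = 1).
    { intros t. unfold p. rewrite <- exp_plus. replace (- k2 * u 1 t + k2 * u 1 t) with 0 by ring. apply exp_0. }
    assert (Hode : forall t, in_time a b t -> Derive p t + k2 * k5 * p t + 4 * k1 = 0).
    { intros t Ht. rewrite (is_derive_unique _ _ _ (Hpd t Ht)).
      destruct (Hsol 1 t Rlt_0_1 Ht) as [_ [_ [_ Heq]]]. rewrite Heq, Hfd by auto.
      replace (- k2 * (k5 + / 1 * (4 * k1 * exp (k2 * u 1 t) / k2)) * p t + k2 * k5 * p t + 4 * k1)
        with (4 * k1 * (1 - p t * exp (k2 * u 1 t))) by (field; auto).
      rewrite HPQ. ring. }
    exists p. split; [|split; [|split]].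
    + intros; auto.
    + intros x t Hx Ht. rewrite (Hform x t Hx Ht). rewrite ln_div, ln_pow by (auto; nra).
      unfold p. rewrite ln_exp. simpl INR. field. auto.
    + intros t Ht. split; [exists (- k2 * u_t u 1 t * p t); apply Hpd; auto | apply Hode; auto].
    + set (q := fun t => (p t + 4 * k1 / (k2 * k5)) * exp (k2 * k5 * t)).
      assert (Hq : forall t, in_time a b t -> is_derive q t 0).
      { intros t Ht. unfold q. auto_derive.
        - exists (- k2 * u_t u 1 t * p t); apply Hpd; auto.
        - pose proof (Hode t Ht) as O.
          change (fun x : R => p x) with p; replace (Derive p t) with (- k2 * k5 * p t - 4 * k1) by lra.
          field. split; auto. }
      destruct (Classical_Prop.classic (exists t0, in_time a b t0)) as [[t0 Ht0]|Hn].
      * exists (q t0). intros t Ht. rewrite <- (const_I a b q Hq t t0 Ht Ht0). unfold q.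
        replace (- (k2 * k5) * t) with (- (k2 * k5 * t)) by ring. 
        rewrite Rmult_assoc, <- exp_plus. replace (k2 * k5 * t + - (k2 * k5 * t)) with 0 by ring.
        rewrite exp_0. field. split; auto.
      * exists 0. intros t Ht. exfalso. apply Hn. exists t. auto.
  - intros [p [Hp [Hu [Hd _]]]].
    assert (Hux : forall y t, 0 < y -> in_time a b t -> is_derive (fun z => u z t) y (2/(k2*y))).
    { intros y t Hy Ht. apply is_derive_ext_loc with (fun z => /k2*ln(z^2/p t)).
      - eapply filter_imp; [|exact (loc_pos y Hy)]. intros z Hz. symmetry; apply Hu; auto.
      - apply dx; auto. }
    assert (Hux' : forall y t, 0 < y -> in_time a b t -> u_x u y t = 2/(k2*y)).
    { intros; unfold u_x; apply is_derive_unique; auto. }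
    assert (Hfl : forall x t, 0 < x -> in_time a b t ->
       is_derive (fun y => k1 * y * exp (k2 * u y t) * u_x u y t) x (4*k1*x/(k2*p t))).
    { intros x t Hx Ht. apply is_derive_ext_loc with (fun y => 2*k1*y^2/(k2*p t)).
      - assert (E : forall z : R, 0 < z -> 2*k1*z^2/(k2*p t) = k1 * z * exp (k2 * u z t) * u_x u z t).
        { intros z Hz.
        rewrite Hux' by auto. rewrite (Hu z t Hz Ht).
        replace (k2 * (/ k2 * ln (z ^ 2 / p t))) with (ln (z ^ 2 / p t)) by (field; auto).
        pose proof (Hp t Ht) as Hpt.
        rewrite exp_ln. 2:{ apply Rmult_lt_0_compat; [nra | apply Rinv_0_lt_compat; auto]. }
        field. repeat split; lra. }
        eapply filter_imp; [|exact (loc_pos x Hx)]. exact E.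
      - specialize (Hp t Ht). auto_derive; auto. field. split; lra. }
    assert (Hut : forall x t, 0 < x -> in_time a b t -> is_derive (fun s => u x s) t (- Derive p t/(k2*p t))).
    { intros x t Hx Ht. apply is_derive_ext_loc with (fun s => /k2*ln(x^2/p s)).
      - eapply filter_imp; [|exact (loc_I a b t Ht)]. intros s Hs. symmetry; apply Hu; auto.
      - apply dt; auto. apply Hd; auto. }
    split.
    + intros x t Hx Ht. repeat split.
      * eexists; apply Hux; auto.
      * eexists; apply Hut; auto.
      * eexists; apply Hfl; auto.
      * assert (E1 : u_t u x t = - Derive p t/(k2*p t)) by (apply is_derive_unique; apply Hut; auto).
        assert (E2 : Derive (fun y => k1 * y * exp (k2 * u y t) * u_x u y t) x = 4*k1*x/(k2*p t))
          by (apply is_derive_unique; apply Hfl; auto).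
        rewrite E1, E2.
        destruct (Hd t Ht) as [_ HD]. specialize (Hp t Ht).
        replace (Derive p t) with (- k2 * k5 * p t - 4 * k1) by lra.
        field. repeat split; lra.
    + intros x t Hx Ht. unfold X_xi, X_tau, X_eta. rewrite Hux' by auto. field. split; lra.
Qed.
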